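(* Let $(a_n)_{n\ge 0}$ be complex numbers with $\#\{n\colon a_n\neq 0\}=+\infty$ and $\varlimsup_{n\to+\infty}\sqrt[n]{|a_n|}=0$. For $r>0$ let $\mathcal{N}(r)=\{n\in\mathbb{Z}_+\colon \ln(|a_n|r^n)>0\}$, $N(r)=\#\mathcal{N}(r)$ and $s(r)=2\sum_{n\in\mathcal{N}(r)}\ln(|a_n|r^n)$. Let $\varepsilon>0$. Then there exists a set $E\subset(1;+\infty)$ of finite logarithmic measure such that for all $r\in(1;+\infty)\setminus E$, $$N(r)<s^{1/2}(r)\exp\{(1+\varepsilon)\sqrt{\ln s(r)}\}.$$
   Context: A set $E\subset(1,+\infty)$ has finite logarithmic measure if $\int_E\frac{dr}{r}<+\infty$. *)

(* Defs.v *)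
From HB Require Import structures.
From mathcomp Require Import all_boot all_order all_algebra.
From mathcomp Require Import all_classical all_reals all_analysis.
From mathcomp Require Import finmap complex.
Set Implicit Arguments. Unset Strict Implicit. Unset Printing Implicit Defensive.
Import Order.TTheory GRing.Theory Num.Theory.
Local Open Scope classical_set_scope.
Local Open Scope ring_scope.

Definition finite_log_measure (R : realType) (E : set R) : Prop :=
  [/\ measurable E, E `<=` `]1, +oo[ &
      (\int[lebesgue_measure]_(x in E) (x^-1)%:E < +oo)%E].

Definition Ncal_set (R : realType) (a : nat -> R[i]) (r : R) : set nat :=
  [set n | 0 < ln (Normc.normc (a n) * r ^+ n)].

Definition N_count (R : realType) (a : nat -> R[i]) (r : R) : nat :=
  (#|` fset_set (Ncal_set a r)|)%fset.

Definition s_val (R : realType) (a : nat -> R[i]) (r : R) : R :=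
  2 * (\sum_(n \in Ncal_set a r) ln (Normc.normc (a n) * r ^+ n)).

(* Main.v *)
Require Import Defs.
From HB Require Import structures.
From mathcomp Require Import all_boot all_order all_algebra.
From mathcomp Require Import all_classical all_reals all_analysis.
From mathcomp Require Import finmap complex measurable_realfun.
From mathcomp Require Import zify ring lra.
Import Order.TTheory GRing.Theory Num.Theory.
Lemma sum_uniq_aux (m : nat) (s : seq nat) : uniq s -> all (fun x => x < m) s ->
  size s * (size s).-1 <= (\sum_(x <- s) x).*2.
Proof.
elim: m s => [|m IH] s us als.
  by case: s us als.
case: (boolP (m \in s)) => ms.
  rewrite (big_rem m ms) /=.
  have us' := rem_uniq m us.
  have szs : size s = (size (rem m s)).+1.
    by rewrite size_rem // prednK // -has_predT; apply/hasP; exists m.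
  have alt : all (fun x => x < m) (rem m s).
    apply/allP => x; rewrite (mem_rem_uniq m us) inE => /andP[xm xs].
    by move/allP: als => /(_ x xs); rewrite ltnS leq_eqVlt (negbTE xm).
  have szt : size (rem m s) <= m.
    rewrite -[X in _ <= X](size_iota 0 m); apply: uniq_leq_size => // x xt.
    by rewrite mem_iota /=; move/allP: alt => /(_ x xt).
  have := IH _ us' alt; rewrite szs /=.
  set n := size (rem m s); set S := \sum_(x <- rem m s) x.
  have -> : n.+1 * n = n * n.-1 + n.*2 by case: n szt => //= n _; lia.
  lia.
apply: IH => //; apply/allP => x xs; move/allP: als => /(_ x xs).
by rewrite ltnS leq_eqVlt; case: eqP => // xm; rewrite -xm xs in ms.
Qed.

Lemma sum_uniq_ge (s : seq nat) : uniq s ->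
  size s * (size s).-1 <= (\sum_(x <- s) x).*2.
Proof.
move=> us; apply: (@sum_uniq_aux (\max_(x <- s) x).+1) => //.
by apply/allP => x xs; rewrite ltnS; apply: leq_bigmax_seq.
Qed.
Local Open Scope classical_set_scope.
Local Open Scope ring_scope.
Set Implicit Arguments. Unset Strict Implicit. Unset Printing Implicit Defensive.

Lemma normc_ge0 (R : realType) (z : R[i]) : 0 <= Normc.normc z.
Proof. by case: z => x y; rewrite /Normc.normc sqrtr_ge0. Qed.

Lemma Ncal_pos (R : realType) (a : nat -> R[i]) r n :
  Ncal_set a r n -> 0 < Normc.normc (a n) * r ^+ n.
Proof.
rewrite /Ncal_set /= => h; rewrite ltNge; apply/negP => h'.
by rewrite ln0 // ltxx in h.
Qed.

Lemma Ncal_finite (R : realType) (a : nat -> R[i])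
  (hlimsup : limn_esup (fun n : nat => ((Normc.normc (a n)) `^ (n%:R^-1))%:E) = 0%E)
  r : 0 < r -> finite_set (Ncal_set a r).
Proof.
move=> r0.
have cu : (fun n : nat => ((Normc.normc (a n)) `^ (n%:R^-1))%:E) @ \oo --> 0%E.
  by apply: limn_esup_le_cvg; rewrite ?hlimsup // => n; rewrite lee_fin powR_ge0.
have [_ cu'] := (fine_cvgP _ _).1 cu.
have r0' : 0 < r^-1 by rewrite invr_gt0.
have [N _ HN] := cvgr_lt _ cu' _ r0'.
apply: (sub_finite_set (B := `I_N.+1)); last exact: finite_II.
move=> n Nn /=; rewrite ltnNge; apply/negP => Nn'.
have Nn2 : (N <= n)%N by lia.
have n0 : (0 < n)%N by lia.
have := HN n Nn2; rewrite /= => hx.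
set x := Normc.normc (a n) `^ n%:R^-1 in hx.
have ex : Normc.normc (a n) = x ^+ n.
  rewrite /x -powR_mulrn ?powR_ge0 // -powRrM mulVf ?powRr1 ?normc_ge0 //.
  by rewrite pnatr_eq0 -lt0n.
move: Nn; rewrite /Ncal_set /= ex -exprMn => h.
have : (x * r) ^+ n < 1.
  have xr0 : 0 <= x * r by rewrite mulr_ge0 ?powR_ge0 // ltW.
  have xr1 : x * r < 1 by rewrite -ltr_pdivlMr // div1r.
  by rewrite exprn_ilt1 // -lt0n.
by move=> /ltW /ln_le0; rewrite leNgt h.
Qed.

Lemma L_shift (R : realType) (a : nat -> R[i]) r1 r2 n :
  0 < r1 -> 0 < r2 -> Ncal_set a r1 n ->
  ln (Normc.normc (a n) * r2 ^+ n) =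
  ln (Normc.normc (a n) * r1 ^+ n) + n%:R * (ln r2 - ln r1).
Proof.
move=> r10 r20 h.
have p1 := Ncal_pos h.
have an0 : 0 < Normc.normc (a n).
  rewrite lt_def normc_ge0 andbT; apply/negP => /eqP e.
  by move: p1; rewrite e mul0r ltxx.
rewrite !lnM ?posrE ?exprn_gt0 // (lnXn n r10) (lnXn n r20).
by rewrite -[ln r1 *+ n]mulr_natl -[ln r2 *+ n]mulr_natl mulrBr -addrA [_ + (_ - _)]addrC subrK.
Qed.

Lemma Ncal_mono (R : realType) (a : nat -> R[i]) r1 r2 :
  0 < r1 -> r1 <= r2 -> Ncal_set a r1 `<=` Ncal_set a r2.
Proof.
move=> r10 r12 n h.
have r20 : 0 < r2 by apply: lt_le_trans r12.
rewrite /Ncal_set /= (L_shift r10 r20 h).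
have d0 : 0 <= ln r2 - ln r1 by rewrite subr_ge0 ler_ln ?posrE.
have := mulr_ge0 (ler0n R n) d0.
move: h; rewrite /Ncal_set /= => h; lra.
Qed.

Lemma s_incr (R : realType) (a : nat -> R[i])
  (hlimsup : limn_esup (fun n : nat => ((Normc.normc (a n)) `^ (n%:R^-1))%:E) = 0%E)
  r1 r2 : 0 < r1 -> r1 <= r2 ->
  s_val a r1 + (ln r2 - ln r1) * ((N_count a r1) * (N_count a r1).-1)%:R
    <= s_val a r2.
Proof.
move=> r10 r12.
have r20 : 0 < r2 by apply: lt_le_trans r12.
have f1 := Ncal_finite hlimsup r10; have f2 := Ncal_finite hlimsup r20.
have sub := @Ncal_mono _ a _ _ r10 r12.
set A1 := Ncal_set a r1 in f1 sub *; set A2 := Ncal_set a r2 in f2 sub *.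
set d := ln r2 - ln r1.
have d0 : 0 <= d by rewrite subr_ge0 ler_ln ?posrE.
rewrite /s_val -/A1 -/A2.
have step1 : \sum_(n \in A1) ln (Normc.normc (a n) * r2 ^+ n)
    <= \sum_(n \in A2) ln (Normc.normc (a n) * r2 ^+ n).
  rewrite [X in _ <= X](fsbigID A1) //.
  have -> : A2 `&` A1 = A1.
    by apply/seteqP; split => x; [case|move=> h; split => //; exact: sub].
  rewrite lerDl; apply: fsumr_ge0 => n [h _]; exact: ltW.
have step2 : \sum_(n \in A1) ln (Normc.normc (a n) * r2 ^+ n) =
    \sum_(n \in A1) ln (Normc.normc (a n) * r1 ^+ n) + (\sum_(n \in A1) (n%:R : R)) * d.
  rewrite (eq_fsbigr (fun n => ln (Normc.normc (a n) * r1 ^+ n) + n%:R * d)); last first.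
    by move=> n /set_mem hn; exact: L_shift.
  by rewrite fsbig_split // mulr_fsuml.
have step3 : ((N_count a r1) * (N_count a r1).-1)%:R <= (\sum_(n \in A1) (n%:R : R)) * 2.
  rewrite fsbig_finite // -natr_sum /N_count -/A1.
  have := @sum_uniq_ge _ (fset_uniq (fset_set A1)).
  by move=> h; rewrite -natrM ler_nat muln2.
have := ler_wpM2l d0 step3.
set S1 := \sum_(n \in A1) ln (Normc.normc (a n) * r1 ^+ n) in step2 *.
set S2 := \sum_(n \in A2) ln (Normc.normc (a n) * r2 ^+ n) in step1 *.
set S12 := \sum_(n \in A1) ln (Normc.normc (a n) * r2 ^+ n) in step1 step2 *.
set P := \sum_(n \in A1) (n%:R : R) in step2 step3 *.
set NN := ((N_count a r1) * (N_count a r1).-1)%:R.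
move=> h; nra.
Qed.

Lemma s_ge_one (R : realType) (a : nat -> R[i])
  (hlimsup : limn_esup (fun n : nat => ((Normc.normc (a n)) `^ (n%:R^-1))%:E) = 0%E)
  r n : 0 < r -> Ncal_set a r n ->
  2 * ln (Normc.normc (a n) * r ^+ n) <= s_val a r.
Proof.
move=> r0 h; have f := Ncal_finite hlimsup r0.
rewrite /s_val (fsbigD1 n) //; rewrite ler_pM2l // lerDl.
by apply: fsumr_ge0 => m [hm _]; exact: ltW.
Qed.

Lemma s_ge0 (R : realType) (a : nat -> R[i]) r : 0 <= s_val a r.
Proof. by rewrite /s_val mulr_ge0 // fsumr_ge0 // => n h; exact: ltW. Qed.

Lemma badN (R : realType) (s N eps : R) : 0 <= s -> 0 <= N ->
  ~ (N < Num.sqrt s * expR ((1 + eps) * Num.sqrt (ln s))) ->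
  s * expR (2 * (1 + eps) * Num.sqrt (ln s)) <= N ^+ 2.
Proof.
move=> s0 N0 /negP; rewrite -leNgt => h.
have X0 : 0 <= Num.sqrt s * expR ((1 + eps) * Num.sqrt (ln s)).
  by rewrite mulr_ge0 ?sqrtr_ge0 // ltW // expR_gt0.
have h2 := ler_pM X0 X0 h h.
have eq : Num.sqrt s * expR ((1 + eps) * Num.sqrt (ln s)) *
    (Num.sqrt s * expR ((1 + eps) * Num.sqrt (ln s))) =
    s * expR (2 * (1 + eps) * Num.sqrt (ln s)).
  rewrite mulrACA -expr2 sqr_sqrtr // -expRD; congr (_ * expR _); ring.
by rewrite -eq expr2.
Qed.

Lemma level (R : realType) (t : R) : 1 <= t ->
  exists k : nat, k.+1%:R <= t < k.+2%:R.
Proof.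
move=> t1.
have [m /andP[h1 h2]] : exists m : nat, m%:R <= t < m.+1%:R.
  by eexists; apply: truncn_itv; apply: le_trans t1.
case: m h1 h2 => [|m] h1 h2.
  by move: h2; rewrite ltNge t1.
by exists m; rewrite h1 h2.
Qed.

Lemma window (R : realType) (a : nat -> R[i])
  (hlimsup : limn_esup (fun n : nat => ((Normc.normc (a n)) `^ (n%:R^-1))%:E) = 0%E)
  (eps : R) (heps : 0 < eps) (k : nat) r1 r2 :
  0 < r1 -> r1 <= r2 ->
  s_val a r1 * expR (2 * (1 + eps) * Num.sqrt (ln (s_val a r1)))
    <= (N_count a r1)%:R ^+ 2 ->
  k.+1%:R <= Num.sqrt (ln (s_val a r1)) ->
  Num.sqrt (ln (s_val a r2)) < k.+2%:R ->
  ln r2 - ln r1 <= 2 * expR (1 - 2 * eps * k.+1%:R).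
Proof.
move=> r10 r12 bad lo hi.
have r20 : 0 < r2 by apply: lt_le_trans r12.
set j : R := k.+1%:R in lo *.
have j1 : 1 <= j by rewrite /j ler1n.
have e2 : k.+2%:R = j + 1 by rewrite /j -addn1 natrD.
rewrite e2 in hi.
set s1 := s_val a r1 in bad lo *; set s2 := s_val a r2 in hi *.
set N1 := N_count a r1 in bad *.
set d := ln r2 - ln r1.
have d0 : 0 <= d by rewrite subr_ge0 ler_ln ?posrE.
have ls1 : 0 <= ln s1.
  rewrite leNgt; apply/negP => h; move: lo; rewrite ltr0_sqrtr //; lra.
have s10 : 0 < s1.
  rewrite ltNge; apply/negP => h; move: lo; rewrite ln0 // sqrtr0; lra.
have ls1j : j ^+ 2 <= ln s1.
  rewrite -(sqr_sqrtr ls1) expr2 [X in _ <= X]expr2.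
  by apply: ler_pM => //; lra.
have s1j : expR (j ^+ 2) <= s1 by rewrite -ler_ln ?posrE ?expR_gt0 // expRK.
have ls2j : ln s2 < (j + 1) ^+ 2.
  case: (lerP 0 (ln s2)) => h.
    rewrite -(sqr_sqrtr h) expr2 [X in _ < X]expr2.
    have := sqrtr_ge0 (ln s2); nra.
  have : 0 < (j + 1) ^+ 2 by rewrite exprn_gt0 //; lra.
  lra.
have s2j : s2 < expR ((j + 1) ^+ 2).
  case: (lerP s2 0) => h; first by apply: le_lt_trans h (expR_gt0 _).
  by rewrite -ltr_ln ?posrE ?expR_gt0 // expRK.
set X := expR (j ^+ 2 + 2 * (1 + eps) * j).
have X0 : 0 < X by apply: expR_gt0.
have NX : X <= N1%:R ^+ 2.
  apply: le_trans bad; rewrite /X expRD.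
  apply: ler_pM; [exact/ltW/expR_gt0|exact/ltW/expR_gt0|exact: s1j|].
  by rewrite ler_expR; apply: ler_wpM2l => //; lra.
have X4 : 4 <= X.
  have := expR_ge1Dx (j ^+ 2 + 2 * (1 + eps) * j).
  rewrite -/X => h; apply: le_trans h.
  have : 1 <= j ^+ 2 by rewrite expr_ge1 //; lra.
  nra.
have N2 : (2 <= N1)%N.
  rewrite leqNgt; apply/negP => h.
  have H1 : N1%:R <= (1 : R) by rewrite lern1 -ltnS.
  have := ler_pM (ler0n R N1) (ler0n R N1) H1 H1.
  rewrite mulr1 -expr2 => H2.
  have H3 := le_trans X4 (le_trans NX H2).
  clear -H3; lra.
have NN : N1%:R ^+ 2 / 2 <= (N1 * N1.-1)%:R :> R.
  case: N1 N2 {bad NX} => [|[|m]] // _.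
  rewrite natrM /= -[m.+2]addn2 -[m.+1]addn1 !natrD.
  have : (0 : R) <= m%:R by [].
  nra.
have inc := s_incr hlimsup r10 r12.
rewrite -/s1 -/s2 -/d -/N1 in inc.
have ej : (j + 1) ^+ 2 = (1 - 2 * eps * j) + (j ^+ 2 + 2 * (1 + eps) * j) by ring.
rewrite ej expRD -/X in s2j.
have key : d * X < 2 * expR (1 - 2 * eps * j) * X.
  have h1 : d * X <= d * (N1%:R ^+ 2) by apply: ler_wpM2l.
  have h2 : d * (N1%:R ^+ 2) <= 2 * (d * (N1 * N1.-1)%:R).
    have := ler_wpM2l d0 NN; lra.
  have := expR_gt0 (j ^+ 2); lra.
by apply: ltW; rewrite -(ltr_pM2r X0).
Qed.

Lemma piece (R : realType) (c del : R) : 0 < c -> 0 <= del ->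
  (\int[lebesgue_measure]_(x in `]1%R, +oo[ `&` `[(c * expR (- del))%R, (c * expR del)%R])
     ((Num.max x 1)^-1)%R%:E <= (2 * del * expR (2 * del))%R%:E)%E.
Proof.
move=> c0 d0.
set al := c * expR (- del); set be := c * expR del.
have al0 : 0 < al by rewrite mulr_gt0 // expR_gt0.
have alb : al <= be.
  by rewrite ler_pM2l // ler_expR; lra.
set D := `]1, +oo[ `&` `[al, be].
have mD : measurable D by apply: measurableI; exact: measurable_itv.
have mg : measurable_fun D (fun x : R => ((Num.max x 1)^-1)%:E).
  apply/measurable_EFinP; apply: nonincreasing_measurable => // x y xy.
  rewrite lef_pV2 ?posrE; last 2 first.
  - by apply: lt_le_trans ltr01 _; rewrite le_max lexx orbT.
  - by apply: lt_le_trans ltr01 _; rewrite le_max lexx orbT.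
  by rewrite ge_max !le_max xy lexx !orbT.
have g0 : forall x, D x -> (0 <= ((Num.max x 1)^-1)%:E)%E.
  by move=> x _; rewrite lee_fin invr_ge0 le_max ler01 orbT.
have gb : forall x, D x -> (((Num.max x 1)^-1)%:E <= (cst (al^-1)%:E) x)%E.
  move=> x; rewrite /D /= !in_itv /= andbT => -[x1 /andP[ax _]].
  have x0 : 0 < x by lra.
  have mx : Num.max x 1 = x by apply/max_idPl; exact: ltW.
  by rewrite /= lee_fin mx lef_pV2 ?posrE.
apply: (le_trans (@ge0_le_integral _ _ _ lebesgue_measure D mD _ _ g0 mg (measurable_cst _) gb)).
rewrite integral_cst //.
have mD' : (lebesgue_measure D <= lebesgue_measure `[al, be])%E.
  have mI : measurable (`[al, be] : set R) by exact: measurable_itv.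
  apply: le_measure; rewrite ?in_setE //; by move=> x [].
have al0' : (0 <= (al^-1)%:E)%E by rewrite lee_fin invr_ge0 ltW.
have := lee_wpmul2l al0' mD'.
rewrite lebesgue_measure_itv /= lte_fin => h.
apply: (le_trans h); case: ifPn => _; last first.
  by rewrite mule0 lee_fin mulr_ge0 ?mulr_ge0 // ltW // expR_gt0.
rewrite -EFinD -EFinM lee_fin.
have -> : al^-1 * (be - al) = expR (2 * del) - 1.
  have alne : al != 0 by rewrite gt_eqF.
  rewrite mulrBr mulVf // /al /be invfM -expRN opprK mulrACA mulVf ?gt_eqF //.
  by rewrite mul1r -expRD; congr (expR _ - 1); ring.
have := expR_ge1Dx (- (2 * del)).
rewrite expRN => h3.
have E0 : 0 < expR (2 * del) by apply: expR_gt0.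
have := ler_wpM2l (ltW E0) h3.
rewrite mulfV ?gt_eqF // => h2.
clear -h2; nra.
Qed.

Lemma geo_fin (R : realType) (M q : R) : 0 <= q < 1 ->
  (\sum_(i <oo) (M * q ^+ i)%:E < +oo)%E.
Proof.
move=> /andP[q0 q1].
have h : (fun n => \sum_(0 <= i < n) (M * q ^+ i)%:E) @ \oo --> (M * (1 - q)^-1)%:E.
  apply: cvg_EFin; first by near=> n; rewrite sumEFin.
  rewrite [X in X @ _ --> _](_ : _ = series (geometric M q)); last first.
    by apply/funext => n; rewrite /= sumEFin.
  by apply: cvg_geometric_series; rewrite ger0_norm.
by rewrite (cvg_lim _ h) ?ltry.
Unshelve. all: by end_near.
Qed.

Unset Implicit Arguments.

Theorem lemma3p3 (R : realType) (a : nat -> R[i])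
  (hinf : infinite_set [set n | a n != 0])
  (hlimsup : limn_esup (fun n : nat => ((Normc.normc (a n)) `^ (n%:R^-1))%:E) = 0%E)
  (eps : R) (heps : 0 < eps) :
  exists E : set R, finite_log_measure E /\
    forall r : R, 1 < r -> ~ E r ->
      (N_count a r)%:R <
        Num.sqrt (s_val a r) * expR ((1 + eps) * Num.sqrt (ln (s_val a r))).
Proof.
have [n0 n0pos an0] : exists2 n0, (0 < n0)%N & a n0 != 0.
  apply: contrapT => H; apply: hinf.
  apply: (sub_finite_set (B := [set 0%N])); last exact: finite_set1.
  move=> n /= an; case: n an => // n an; exfalso; apply: H.
  by exists n.+1.
set m := Normc.normc (a n0).
have m0 : 0 < m.
  rewrite lt_def normc_ge0 andbT; apply/eqP => e.
  by move: an0; rewrite (Normc.eq0_normc e) eqxx.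
set R0 := 1 + expR (expR 1) / m.
have R01 : 1 < R0 by rewrite ltrDl divr_gt0 // expR_gt0.
have e2 : 2 <= expR 1 :> R by have := expR_ge1Dx (1 : R); lra.
have sbig : forall r, R0 <= r -> 1 <= ln (s_val a r).
  move=> r rR.
  have r1 : 1 < r by apply: lt_le_trans rR.
  have r0 : 0 < r by apply: lt_trans r1.
  have hr : r <= r ^+ n0.
    have := exprn_ege1 n0.-1 (ltW r1).
    rewrite -[in X in _ -> X](prednK n0pos) exprS => h.
    by have := ler_wpM2l (ltW r0) h; rewrite mulr1.
  have mR0 : m * R0 = m + expR (expR 1).
    by rewrite /R0 mulrDr mulr1 mulrC divfK // gt_eqF.
  have h1 : expR (expR 1) <= m * r ^+ n0.
    have := ler_wpM2l (ltW m0) hr; have := ler_wpM2l (ltW m0) rR.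
    rewrite mR0 => h h'; apply: le_trans h'; apply: le_trans h.
    by rewrite lerDr ltW.
  have hn0 : Ncal_set a r n0.
    rewrite /Ncal_set /=; apply: ln_gt0; apply: lt_le_trans h1.
    by rewrite expR_gt1 expR_gt0.
  have h2 := s_ge_one hlimsup r0 hn0.
  have h3 : expR 1 <= ln (m * r ^+ n0).
    rewrite -[X in X <= _]expRK ler_ln ?posrE ?expR_gt0 //.
    by apply: lt_le_trans h1; apply: expR_gt0.
  have h4 : expR 1 <= s_val a r.
    rewrite /m in h3; have := expR_gt0 (1 : R); lra.
  rewrite -[X in X <= _](expRK 1) ler_ln ?posrE ?expR_gt0 //.
  by apply: lt_le_trans h4; apply: expR_gt0.
pose good r := (N_count a r)%:R <
  Num.sqrt (s_val a r) * expR ((1 + eps) * Num.sqrt (ln (s_val a r))).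
pose B (k : nat) := [set r | 1 < r /\ ~ good r /\
  k.+1%:R <= Num.sqrt (ln (s_val a r)) < k.+2%:R].
pose del (k : nat) : R := 2 * expR (1 - 2 * eps * k.+1%:R).
have del0 k : 0 <= del k by rewrite mulr_ge0 // ltW // expR_gt0.
pose c k := xget 1 (B k).
have winB k r1 r2 : B k r1 -> B k r2 -> r1 <= r2 -> ln r2 - ln r1 <= del k.
  move=> [r11 [g1 /andP[l1 _]]] [_ [_ /andP[_ u2]]] r12.
  have r10 : 0 < r1 by apply: lt_trans r11.
  apply: (window hlimsup heps r10 r12 _ l1 u2).
  by apply: badN => //; exact: s_ge0.
have Bin k r : B k r -> c k * expR (- del k) <= r <= c k * expR (del k).
  move=> Br.
  have Bc : B k (c k) by apply: xgetPex; exists r.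
  have c0 : 0 < c k by case: Bc => h _; apply: lt_trans h.
  have r0 : 0 < r by case: Br => h _; apply: lt_trans h.
  have hl : ln (c k) - del k <= ln r <= ln (c k) + del k.
    case: (lerP r (c k)) => rc.
      have w := winB _ _ _ Br Bc rc.
      have : ln r <= ln (c k) by rewrite ler_ln ?posrE.
      move: w; clear; move=> w w'; apply/andP; split; lra.
    have w := winB _ _ _ Bc Br (ltW rc).
    have : ln (c k) <= ln r by rewrite ler_ln ?posrE // ltW.
    have := del0 k.
    move: w; clear; move=> w w' w''; apply/andP; split; lra.
  case/andP: hl => hl1 hl2.
  have r0' : r \is Num.pos by rewrite posrE.
  have c0' : c k \is Num.pos by rewrite posrE.
  apply/andP; split.
    by rewrite -[leRHS](lnK r0') -[X in X * _](lnK c0') -expRD ler_expR.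
  by rewrite -[leLHS](lnK r0') -[X in X * _](lnK c0') -expRD ler_expR.
pose J (k : nat) : set R := if k is k'.+1 then
  `]1, +oo[%classic `&` `[c k' * expR (- del k'), c k' * expR (del k')]%classic else `]1, R0]%classic.
have mJ k : measurable (J k).
  by case: k => [|k] /=; [exact: measurable_itv | apply: measurableI; exact: measurable_itv].
have J1 k x : J k x -> 1 < x.
  case: k => [|k] /=.
    by rewrite in_itv /= => /andP[].
  by move=> [+ _]; rewrite in_itv /= andbT.
exists (\bigcup_k J k); split; last first.
  move=> r r1 nE; apply: contrapT => ng.
  have rR0 : R0 < r.
    rewrite ltNge; apply/negP => h; apply: nE; exists 0%N => //=.
    by rewrite in_itv /= r1 h.
  have l1 := sbig r (ltW rR0).
  have [k hk] : exists k : nat, k.+1%:R <= Num.sqrt (ln (s_val a r)) < k.+2%:R.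
    by apply: level; rewrite -sqrtr1 ler_sqrt //; lra.
  have Br : B k r by split => //; split.
  apply: nE; exists k.+1 => //=; split; first by rewrite in_itv /= andbT.
  by rewrite in_itv /=; exact: Bin.
split.
- exact: bigcupT_measurable.
- by move=> x [k _ /J1 x1]; rewrite /= in_itv /= andbT.
set E := \bigcup_k J k.
pose q : R := expR (- (2 * eps)).
have q0 : 0 <= q < 1.
  rewrite ltW ?expR_gt0 //= -expR0 ltr_expR; lra.
pose Y : R := expR (4 * expR 1).
pose M : R := R0 + 4 * expR 1 * Y.
have Y0 : 0 < Y by apply: expR_gt0.
have e0 : 0 < expR 1 :> R by apply: expR_gt0.
have mg : measurable_fun setT (fun x : R => ((Num.max x 1)^-1)%:E).
  apply/measurable_EFinP; apply: nonincreasing_measurable => // x y xy.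
  rewrite lef_pV2 ?posrE; last 2 first.
  - by apply: lt_le_trans ltr01 _; rewrite le_max lexx orbT.
  - by apply: lt_le_trans ltr01 _; rewrite le_max lexx orbT.
  by rewrite ge_max !le_max xy lexx !orbT.
have mgS : forall D : set R, measurable_fun D (fun x : R => ((Num.max x 1)^-1)%:E).
  by move=> D; apply: measurable_funS mg.
have g0 : forall x : R, (0 <= ((Num.max x 1)^-1)%:E)%E.
  by move=> x; rewrite lee_fin invr_ge0 le_max ler01 orbT.
have geq : (\int[lebesgue_measure]_(x in E) (x^-1)%:E =
    \int[lebesgue_measure]_(x in E) ((Num.max x 1)^-1)%:E)%E.
  apply: eq_integral => x /set_mem [k _ /J1 x1].
  have mx : Num.max x 1 = x by apply/max_idPl; exact: ltW.
  by rewrite mx.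
rewrite geq /E seqDU_bigcup_eq.
rewrite (@ge0_integral_bigcup _ _ _ lebesgue_measure (seqDU J) _
  (seqDU_measurable mJ) (mgS _) (fun x _ => g0 x) (@trivIset_seqDU _ J)).
apply: (le_lt_trans _ (geo_fin M q0)).
apply: lee_nneseries.
  by move=> i _ _; apply: integral_ge0 => x _; exact: g0.
move=> n _.
apply: (@le_trans _ _ (\int[lebesgue_measure]_(x in J n) ((Num.max x 1)^-1)%:E)%E).
  apply: ge0_subset_integral; [exact: seqDU_measurable|exact: mJ|exact: mgS|
    by move=> x _; exact: g0|exact: subset_seqDU].
case: n => [|k].
  have gb : forall x, J 0%N x -> (((Num.max x 1)^-1)%:E <= (cst 1%:E) x)%E.
    move=> x /J1 x1.
    have mx : Num.max x 1 = x by apply/max_idPl; exact: ltW.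
    rewrite /= lee_fin mx -[leRHS]invr1 lef_pV2 ?posrE ?ltW //.
    by apply: lt_trans x1.
  apply: (le_trans (@ge0_le_integral _ _ _ lebesgue_measure (J 0%N) (mJ 0%N) _ _
    (fun x _ => g0 x) (mgS _) (measurable_cst _) gb)).
  rewrite integral_cst; last exact: (mJ 0%N).
  rewrite /J /=.
  have L := lebesgue_measure_itv `]1, R0].
  rewrite /= lte_fin R01 -EFinD in L.
  rewrite (_ : lebesgue_measure _ = (R0 - 1)%:E); last exact: L.
  rewrite -EFinM lee_fin expr0 mulr1 mul1r.
  have : 0 <= 4 * expR 1 * Y by rewrite !mulr_ge0 // ltW.
  rewrite /M; clear; lra.
have c0 : 0 < c k.
  case: (pselect (exists x, B k x)) => [/(xgetPex 1) [h _]|H].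
    by apply: lt_trans h.
  by rewrite /c xgetPN // => x Bx; apply: H; exists x.
apply: (le_trans (piece c0 (del0 k))).
rewrite lee_fin.
have dq : del k = 2 * expR 1 * q ^+ k.+1.
  rewrite /del /q.
  have -> : 1 - 2 * eps * k.+1%:R = 1 + k.+1%:R * (- (2 * eps)) by ring.
  by rewrite expRD expRM_natl mulrA.
have Q0 : 0 <= q ^+ k.+1 by rewrite exprn_ge0 //; case/andP: q0.
have Q1 : q ^+ k.+1 <= 1 by rewrite exprn_ile1 //; case/andP: q0 => ? /ltW.
have dle : del k <= 2 * expR 1.
  rewrite dq; have := ler_wpM2l (_ : 0 <= 2 * expR 1) Q1.
  by rewrite mulr1; apply; rewrite mulr_ge0 // ltW.
have E1 : expR (2 * del k) <= Y by rewrite /Y ler_expR; lra.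
have h1 := ler_wpM2l (_ : 0 <= 4 * expR 1 * q ^+ k.+1) E1.
have h2 : 0 <= R0 * q ^+ k.+1 by rewrite mulr_ge0 // ltW // (lt_trans ltr01).
rewrite dq /M.
set Q := q ^+ k.+1 in h1 h2 *.
set X := expR (2 * (2 * expR 1 * Q)).
have h1' : 4 * expR 1 * Q * X <= 4 * expR 1 * Q * Y.
  rewrite /X -dq; apply: h1; rewrite !mulr_ge0 // ltW.
clear -h1' h2; nra.
Qed.
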